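(* Let $\mathcal M$ and $\mathcal N$ be quantum channels satisfying $s$-detailed balance with respect to $\rho_\beta$. Then $\mathcal M\circ\mathcal N\circ\mathcal M$ also satisfies $s$-detailed balance with respect to $\rho_\beta$. Moreover, if $\mathcal N$ has $\rho_\beta$ as its unique fixed point and its spectrum is contained in $[0,1]$, then $\mathcal M\circ\mathcal N\circ\mathcal M$ also has $\rho_\beta$ as its unique fixed point and its spectrum lies in $[0,1]$.
   Context: Let $H$ be a Hermitian operator on $n$ qubits, $\beta>0$, $\rho_\beta=e^{-\beta H}/\operatorname{tr}(e^{-\beta H})$. A quantum channel is a CPTP map $\mathcal T(X)=\sum_uK_uXK_u^\dagger$ with dual $\mathcal T^\dagger(X)=\sum_uK_u^\dagger XK_u$. For $s\in[0,1]$, $\langle A,B\rangle_s=\operatorname{tr}(A^\dagger\rho_\beta^{1-s}B\rho_\beta^s)$; $\mathcal T$ satisfies $s$-detailed balance w.r.t. $\rho_\beta$ if $\langle A,\mathcal T^\dagger(B)\rangle_s=\langle\mathcal T^\dagger(A),B\rangle_s$ for all matrices $A,B$. Spectrum = set of eigenvalues of the channel as a linear map on $2^n\times2^n$ matrices; a fixed point is a state $\sigma$ with $\mathcal T(\sigma)=\sigma$. *)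

(* Defs.v *)
From HB Require Import structures.
From mathcomp Require Import all_boot all_order all_algebra.
From mathcomp Require Import sesquilinear spectral.
From mathcomp Require Import complex.
From mathcomp Require Import reals sequences exp.
Set Implicit Arguments. Unset Strict Implicit. Unset Printing Implicit Defensive.
Import Order.TTheory GRing.Theory Num.Theory Num.Def.
Local Open Scope ring_scope.
Local Open Scope complex_scope.

Section QDefs.
Variable R : realType.
Local Notation C := R[i].

Definition dag m k (A : 'M[C]_(m, k)) : 'M[C]_(k, m) := (map_mx conjC A)^T.

(* f(A) for a Hermitian matrix A and a real function f, via the library's
   spectral decomposition A = P^-1 diag(d) P (P unitary, d real). *)
Definition hermfun (f : R -> R) k (A : 'M[C]_k) : 'M[C]_k :=
  invmx (spectralmx A)
  *m diag_mx (\row_i (f (complex.Re (spectral_diag A 0 i)))%:C)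
  *m spectralmx A.

Definition mxexp k (A : 'M[C]_k) := hermfun (@expR R) A.
Definition mxpowr k (A : 'M[C]_k) (t : R) := hermfun (fun x => x `^ t) A.

Definition gibbs k (beta : R) (H : 'M[C]_k) : 'M[C]_k :=
  (\tr (mxexp (- (beta%:C) *: H)))^-1 *: mxexp (- (beta%:C) *: H).

Definition sinner k (s : R) (rho A B : 'M[C]_k) : C :=
  \tr (dag A *m mxpowr rho (1 - s) *m B *m mxpowr rho s).

Definition kraus_map k (Ks : seq 'M[C]_k) (X : 'M[C]_k) : 'M[C]_k :=
  \sum_(K <- Ks) K *m X *m dag K.
Definition kraus_dual k (Ks : seq 'M[C]_k) (X : 'M[C]_k) : 'M[C]_k :=
  \sum_(K <- Ks) dag K *m X *m K.

(* quantum channel: CPTP map, i.e. Kraus form with sum K^dagger K = 1 *)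
Definition is_channel k (T : 'M[C]_k -> 'M[C]_k) : Prop :=
  exists Ks : seq 'M[C]_k,
    \sum_(K <- Ks) dag K *m K = 1%:M /\ forall X, T X = kraus_map Ks X.

(* s-detailed balance: <A, T^dagger B>_s = <T^dagger A, B>_s, where
   T^dagger is the dual computed from a Kraus representation of T (the dual
   does not depend on the chosen Kraus representation). *)
Definition detailed_balance k (s : R) (rho : 'M[C]_k)
  (T : 'M[C]_k -> 'M[C]_k) : Prop :=
  exists Ks : seq 'M[C]_k, (forall X, T X = kraus_map Ks X) /\
    forall A B, sinner s rho A (kraus_dual Ks B) = sinner s rho (kraus_dual Ks A) B.

Definition is_psd k (A : 'M[C]_k) : Prop :=
  A \is hermsymmx /\ forall v : 'rV[C]_k, 0 <= (v *m A *m dag v) 0 0.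
Definition is_state k (A : 'M[C]_k) : Prop := is_psd A /\ \tr A = 1.

Definition unique_fixed_point k (T : 'M[C]_k -> 'M[C]_k) (sigma : 'M[C]_k) :=
  is_state sigma /\ T sigma = sigma /\
  forall tau, is_state tau -> T tau = tau -> tau = sigma.

Definition spectrum_in01 k (T : 'M[C]_k -> 'M[C]_k) : Prop :=
  forall (mu : C) (X : 'M[C]_k), X != 0 -> T X = mu *: X -> 0 <= mu <= 1.

End QDefs.

(* Main.v *)
Require Import Defs.
From HB Require Import structures.
From mathcomp Require Import all_boot all_order all_algebra.
From mathcomp Require Import sesquilinear spectral.
From mathcomp Require Import complex.
From mathcomp Require Import reals sequences exp.
From mathcomp Require Import ring lra.
Import Order.TTheory GRing.Theory Num.Theory.
Local Open Scope ring_scope.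
Set Implicit Arguments. Unset Strict Implicit. Unset Printing Implicit Defensive.
Section Q.
Variable R : realType.
Local Notation C := R[i].

Section Mx.
Variable k : nat.
Implicit Types (A B X Y : 'M[C]_k).

Lemma dagK m p (A : 'M[C]_(m,p)) : dag (dag A) = A.
Proof. by apply/matrixP => i j; rewrite !mxE conjCK. Qed.

Lemma dagM m p q (A : 'M[C]_(m,p)) (B : 'M[C]_(p,q)) : dag (A *m B) = dag B *m dag A.
Proof. by rewrite /dag map_mxM trmx_mul. Qed.

Lemma dagD m p (A B : 'M[C]_(m,p)) : dag (A + B) = dag A + dag B.
Proof. by apply/matrixP => i j; rewrite !mxE rmorphD. Qed.

Lemma dagN m p (A : 'M[C]_(m,p)) : dag (- A) = - dag A.
Proof. by apply/matrixP => i j; rewrite !mxE rmorphN. Qed.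

Lemma dagZ m p a (A : 'M[C]_(m,p)) : dag (a *: A) = a^* *: dag A.
Proof. by apply/matrixP => i j; rewrite !mxE rmorphM. Qed.

Lemma dag0 m p : dag (0 : 'M[C]_(m,p)) = 0.
Proof. by apply/matrixP => i j; rewrite !mxE rmorph0. Qed.

Lemma dag_sum (I : Type) (r : seq I) (F : I -> 'M[C]_k) :
  dag (\sum_(i <- r) F i) = \sum_(i <- r) dag (F i).
Proof.
elim: r => [|a r IH]; first by rewrite !big_nil dag0.
by rewrite !big_cons dagD IH.
Qed.

Lemma dag1 : dag (1%:M : 'M[C]_k) = 1%:M.
Proof. by rewrite /dag map_scalar_mx tr_scalar_mx /= conjC1. Qed.

Lemma tr_dag A : \tr (dag A) = (\tr A)^*.
Proof. rewrite /dag mxtrace_tr /mxtrace (rmorph_sum (@Num.conj_op C)); apply: eq_bigr => i _; by rewrite mxE. Qed.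

Lemma tr_delta_mul (i j : 'I_k) A : \tr (delta_mx j i *m A) = A i j.
Proof.
rewrite /mxtrace (bigD1 j) //= big1 ?addr0.
  rewrite mxE (bigD1 i) //= big1 ?addr0; first by rewrite mxE !eqxx mul1r.
  by move=> l /negbTE hl; rewrite mxE hl andbF mul0r.
move=> l /negbTE hl; rewrite mxE big1 // => m _; rewrite mxE.
by rewrite hl /= mul0r.
Qed.

Lemma tr_mul_eq0 A : (forall X, \tr (X *m A) = 0) -> A = 0.
Proof. by move=> h; apply/matrixP => i j; rewrite -tr_delta_mul h mxE. Qed.

Lemma tr_mul_inj A B : (forall X, \tr (X *m A) = \tr (X *m B)) -> A = B.
Proof.
move=> h; apply/eqP; rewrite -subr_eq0; apply/eqP/tr_mul_eq0 => X.
by rewrite mulmxBr raddfB /= h subrr.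
Qed.

Lemma tr_sum (I : Type) (r : seq I) (F : I -> 'M[C]_k) :
  \tr (\sum_(i <- r) F i) = \sum_(i <- r) \tr (F i).
Proof.
elim: r => [|a r IH]; first by rewrite !big_nil mxtrace0.
by rewrite !big_cons mxtraceD IH.
Qed.

Lemma kraus_map_lin (Ks : seq 'M[C]_k) a X Y :
  kraus_map Ks (a *: X + Y) = a *: kraus_map Ks X + kraus_map Ks Y.
Proof.
rewrite /kraus_map scaler_sumr -big_split; apply: eq_bigr => K _ /=.
by rewrite mulmxDr mulmxDl -scalemxAr -scalemxAl.
Qed.

Lemma kraus_dual_lin (Ks : seq 'M[C]_k) a X Y :
  kraus_dual Ks (a *: X + Y) = a *: kraus_dual Ks X + kraus_dual Ks Y.
Proof.
rewrite /kraus_dual scaler_sumr -big_split; apply: eq_bigr => K _ /=.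
by rewrite mulmxDr mulmxDl -scalemxAr -scalemxAl.
Qed.

Lemma kraus_map_dag (Ks : seq 'M[C]_k) X : dag (kraus_map Ks X) = kraus_map Ks (dag X).
Proof. by rewrite /kraus_map dag_sum; apply: eq_bigr => K _; rewrite !dagM dagK mulmxA. Qed.

Lemma kraus_dual_dag (Ks : seq 'M[C]_k) X : dag (kraus_dual Ks X) = kraus_dual Ks (dag X).
Proof. by rewrite /kraus_dual dag_sum; apply: eq_bigr => K _; rewrite !dagM dagK mulmxA. Qed.

Lemma tr_dual (Ks : seq 'M[C]_k) X Y :
  \tr (kraus_dual Ks X *m Y) = \tr (X *m kraus_map Ks Y).
Proof.
rewrite /kraus_dual /kraus_map mulmx_suml mulmx_sumr !tr_sum.
apply: eq_bigr => K _.
by rewrite !mulmxA [RHS]mxtrace_mulC !mulmxA.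
Qed.

Lemma dual_unique (K1 K2 : seq 'M[C]_k) :
  (forall X, kraus_map K1 X = kraus_map K2 X) ->
  forall Y, kraus_dual K1 Y = kraus_dual K2 Y.
Proof.
move=> h Y; apply: tr_mul_inj => X.
by rewrite mxtrace_mulC tr_dual h -tr_dual mxtrace_mulC.
Qed.

Definition kcomp (K1 K2 : seq 'M[C]_k) := [seq A *m B | A <- K1, B <- K2].

Lemma kcomp_map K1 K2 X : kraus_map (kcomp K1 K2) X = kraus_map K1 (kraus_map K2 X).
Proof.
rewrite /kraus_map /kcomp big_allpairs_dep /=; apply: eq_bigr => A _.
rewrite mulmx_sumr mulmx_suml; apply: eq_bigr => B _.
by rewrite dagM !mulmxA.
Qed.

Lemma kcomp_dual K1 K2 X : kraus_dual (kcomp K1 K2) X = kraus_dual K2 (kraus_dual K1 X).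
Proof.
rewrite /kraus_dual /kcomp big_allpairs_dep /= exchange_big /=; apply: eq_bigr => B _.
rewrite mulmx_sumr mulmx_suml; apply: eq_bigr => A _.
by rewrite dagM !mulmxA.
Qed.

End Mx.
End Q.
Section Part1.
Variable R : realType.
Local Notation C := R[i].

Lemma db_comp k (s : R) (rho : 'M[C]_k) (M N : 'M[C]_k -> 'M[C]_k) :
  detailed_balance s rho M -> detailed_balance s rho N ->
  detailed_balance s rho (fun X => M (N (M X))).
Proof.
move=> [KM [hM dM]] [KN [hN dN]].
exists (kcomp KM (kcomp KN KM)); split.
  by move=> X; rewrite !kcomp_map -hM -hN -hM.
move=> A B; rewrite !kcomp_dual.
by rewrite dM dN dM.
Qed.
End Part1.
Section Coords.
Variable R : realType.
Local Notation C := R[i].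

Definition dot m (u v : 'rV[C]_m) : C := (u *m dag v) 0 0.

Lemma dotE m (u v : 'rV[C]_m) : dot u v = \sum_i u 0 i * (v 0 i)^*.
Proof. by rewrite /dot mxE; apply: eq_bigr => i _; rewrite !mxE. Qed.

Lemma dot_ge0 m (u : 'rV[C]_m) : 0 <= dot u u.
Proof. by rewrite dotE; apply: sumr_ge0 => i _; apply: mul_conjC_ge0. Qed.

Lemma dot_gt0 m (u : 'rV[C]_m) : u != 0 -> 0 < dot u u.
Proof.
move=> u0; have [i ui] : exists i, u 0 i != 0.
  apply/existsP; apply: contraR u0 => /existsPn h; apply/eqP/rowP => i.
  by rewrite mxE; apply/eqP; have := h i; rewrite negbK.
rewrite dotE (bigD1 i) //=; apply: ltr_wpDr; last by rewrite mul_conjC_gt0.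
by apply: sumr_ge0 => j _; apply: mul_conjC_ge0.
Qed.

Lemma lin_sum m p (g : 'rV[C]_m -> 'rV[C]_p)
  (glin : forall a x y, g (a *: x + y) = a *: g x + g y) (I : Type) (r : seq I) a x :
  g (\sum_(i <- r) a i *: x i) = \sum_(i <- r) a i *: g (x i).
Proof.
have g0 : g 0 = 0.
  have := glin 1 0 0; rewrite !scale1r addr0 => h.
  by apply: (addrI (g 0)); rewrite addr0 -h.
elim: r => [|b r IH]; first by rewrite !big_nil.
by rewrite !big_cons glin IH.
Qed.

End Coords.
Section Coords2.
Variable R : realType.
Local Notation C := R[i].

Lemma dot_delta_r m (x : 'rV[C]_m) j : dot x (delta_mx 0 j) = x 0 j.
Proof.
rewrite dotE (bigD1 j) //= big1 ?addr0; first by rewrite mxE !eqxx conjC1 mulr1.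
by move=> l /negbTE hl; rewrite mxE hl andbF conjC0 mulr0.
Qed.

Lemma dot_delta_l m (x : 'rV[C]_m) j : dot (delta_mx 0 j) x = (x 0 j)^*.
Proof.
rewrite dotE (bigD1 j) //= big1 ?addr0; first by rewrite mxE !eqxx mul1r.
by move=> l /negbTE hl; rewrite mxE hl andbF mul0r.
Qed.

Lemma dag_trC m p (A : 'M[C]_(m,p)) : dag A = (A ^t*)%sesqui.
Proof. by rewrite /dag map_trmx. Qed.

Lemma coords k m (ip : 'M[C]_k -> 'M[C]_k -> C) (Phi : 'M[C]_k -> 'rV[C]_m)
  (Psi : 'rV[C]_m -> 'M[C]_k)
  (PhiK : cancel Phi Psi) (PsiK : cancel Psi Phi)
  (Philin : forall a x y, Phi (a *: x + y) = a *: Phi x + Phi y)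
  (ipE : forall A B, ip A B = dot (Phi B) (Phi A))
  (D : 'M[C]_k -> 'M[C]_k) (Dlin : forall a x y, D (a *: x + y) = a *: D x + D y)
  (Dsa : forall A B, ip A (D B) = ip (D A) B) :
  exists (c : 'M[C]_k -> 'rV[C]_m) (lam : 'I_m -> C),
   [/\ forall i, lam i \is Num.real,
       forall i, exists X, X != 0 /\ D X = lam i *: X,
       forall X Y, ip X Y = \sum_i (c X 0 i)^* * c Y 0 i,
       forall X i, c (D X) 0 i = lam i * c X 0 i &
       forall X Y, c X = c Y -> X = Y].
Proof.
have Psilin : forall a u w, Psi (a *: u + w) = a *: Psi u + Psi w.
  by move=> a u w; apply: (can_inj PhiK); rewrite Philin !PsiK.
have Phi0 : Phi 0 = 0.
  have := Philin 1 0 0; rewrite !scale1r addr0 => h.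
  by apply: (addrI (Phi 0)); rewrite addr0 -h.
have PhiZ : forall a x, Phi (a *: x) = a *: Phi x.
  by move=> a x; rewrite -[a *: x]addr0 Philin Phi0 addr0.
pose f := fun v => Phi (D (Psi v)).
have flin : forall a u w, f (a *: u + w) = a *: f u + f w.
  by move=> a u w; rewrite /f Psilin Dlin Philin.
have fsa : forall u w, dot (f w) u = dot w (f u).
  by move=> u w; have := Dsa (Psi u) (Psi w); rewrite !ipE /f !PsiK.
pose F := \matrix_(i, j) (f (delta_mx 0 i)) 0 j : 'M[C]_m.
have fF : forall v, v *m F = f v.
  move=> v; rewrite [in RHS](row_sum_delta v) (lin_sum flin).
  apply/rowP => j; rewrite !mxE summxE; apply: eq_bigr => i _; rewrite !mxE.
  done.
have Fh : F \is hermsymmx.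
  rewrite is_hermitianmxE expr0 scale1r; apply/eqP/matrixP => i j; rewrite !mxE.
  have := fsa (delta_mx 0 j) (delta_mx 0 i).
  by rewrite dot_delta_r dot_delta_l.
have /orthomx_spectralP Fe := hermitian_normalmx Fh.
have hP := spectral_unitarymx F.
have Freal := hermitian_spectral_diag_real Fh.
move: Fe hP Freal; set P := spectralmx F; set sp := spectral_diag F => Fe hP Freal.
have PPd : P *m dag P = 1%:M by have /unitarymxP := hP; rewrite dag_trC.
have PdP : dag P *m P = 1%:M := mulmx1C PPd.
have iP : invmx P = dag P by rewrite invmx_unitary // dag_trC.
pose c := fun X => Phi X *m dag P.
have cinj : forall X Y, c X = c Y -> X = Y.
  move=> X Y /(congr1 (mulmx^~ P)); rewrite /c -!mulmxA PdP !mulmx1.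
  exact: (can_inj PhiK).
have cD : forall X, c (D X) = c X *m diag_mx sp.
  move=> X; rewrite /c; have -> : Phi (D X) = f (Phi X) by rewrite /f PhiK.
  by rewrite -fF Fe iP !mulmxA -(mulmxA _ P) PPd mulmx1.
have cDi : forall X i, c (D X) 0 i = sp 0 i * c X 0 i.
  by move=> X i; rewrite cD mul_mx_diag mxE mulrC.
exists c, (fun i => sp 0 i); split => //.
- by move=> i; exact: (mxOverP Freal 0 i).
- move=> i; exists (Psi (delta_mx 0 i *m P)).
  have ce : c (Psi (delta_mx 0 i *m P)) = delta_mx 0 i.
    by rewrite /c PsiK -mulmxA PPd mulmx1.
  split.
    apply/eqP => h0; have := ce; rewrite h0 /c Phi0 mul0mx => /rowP /(_ i).
    by rewrite !mxE !eqxx /= => /eqP; rewrite eq_sym oner_eq0.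
  have cZ : forall a X, c (a *: X) = a *: c X by move=> a X; rewrite /c PhiZ -scalemxAl.
  apply: cinj; apply/rowP => j; rewrite cDi cZ ce !mxE /=.
  by case: (eqVneq j i) => [->|_]; rewrite ?mulr0.
- move=> X Y; rewrite ipE; transitivity (dot (c Y) (c X)).
    by rewrite /dot /c dagM dagK mulmxA -(mulmxA (Phi Y)) PdP mulmx1.
  by rewrite dotE; apply: eq_bigr => i _; rewrite mulrC.
Qed.

End Coords2.
Section Coords3.
Variable R : realType.
Local Notation C := R[i].

Lemma sum_le_eq m (F G : 'I_m -> C) : (forall i, F i <= G i) ->
  \sum_i F i = \sum_i G i -> forall i, F i = G i.
Proof.
move=> hle heq i; apply/eqP; rewrite eq_sym -subr_eq0; apply/eqP.
have h0 : \sum_i (G i - F i) = 0 by rewrite sumrB heq subrr.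
by apply: (psumr_eq0P _ h0) => // j _; rewrite subr_ge0.
Qed.

Variables (k m : nat) (ip : 'M[C]_k -> 'M[C]_k -> C) (D : 'M[C]_k -> 'M[C]_k)
  (c : 'M[C]_k -> 'rV[C]_m) (lam : 'I_m -> C)
  (hip : forall X Y, ip X Y = \sum_i (c X 0 i)^* * c Y 0 i)
  (hcD : forall X i, c (D X) 0 i = lam i * c X 0 i)
  (cinj : forall X Y, c X = c Y -> X = Y).

Let n Z i := (c Z 0 i)^* * c Z 0 i.
Let n_ge0 Z i : 0 <= n Z i.
Proof. by rewrite /n mulrC mul_conjC_ge0. Qed.
Let n_eq0 Z i : n Z i = 0 -> c Z 0 i = 0.
Proof. by move/eqP; rewrite /n mulrC mul_conjC_eq0 => /eqP. Qed.

Lemma coords_C1 (hlam : forall i, 0 <= lam i <= 1) Z :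
  [/\ 0 <= ip Z (D Z), ip Z (D Z) <= ip Z Z & (ip Z (D Z) = ip Z Z -> D Z = Z)].
Proof.
have e1 : ip Z (D Z) = \sum_i lam i * n Z i.
  by rewrite hip; apply: eq_bigr => i _; rewrite hcD /n mulrCA.
have e2 : ip Z Z = \sum_i n Z i by rewrite hip.
have hle : forall i, lam i * n Z i <= n Z i.
  by move=> i; have /andP[_ h1] := hlam i; rewrite ler_piMl.
split.
- by rewrite e1; apply: sumr_ge0 => i _; apply: mulr_ge0 => //; case/andP: (hlam i).
- by rewrite e1 e2; apply: ler_sum => i _.
- rewrite e1 e2 => /(sum_le_eq hle) he; apply: cinj; apply/rowP => i.
  rewrite hcD; have := he i; move/eqP; rewrite -subr_eq0 -{2}(mul1r (n Z i)) -mulrBl mulf_eq0.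
  case/orP => [|/eqP/n_eq0 ->]; last by rewrite mulr0.
  by rewrite subr_eq0 => /eqP ->; rewrite mul1r.
Qed.

Lemma coords_C2 (hreal : forall i, lam i \is Num.real) (hl1 : forall i, lam i * lam i <= 1) Y :
  ip (D Y) (D Y) <= ip Y Y /\ (ip (D Y) (D Y) = ip Y Y -> D (D Y) = Y).
Proof.
have e1 : ip (D Y) (D Y) = \sum_i (lam i * lam i) * n Y i.
  rewrite hip; apply: eq_bigr => i _; rewrite !hcD /n.
  rewrite [(lam i * _)^*]rmorphM /= (conj_Creal (hreal i)).
  by rewrite mulrACA.
have e2 : ip Y Y = \sum_i n Y i by rewrite hip.
have hle : forall i, (lam i * lam i) * n Y i <= n Y i.
  by move=> i; rewrite ler_piMl.
split; first by rewrite e1 e2; apply: ler_sum => i _.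
rewrite e1 e2 => /(sum_le_eq hle) he; apply: cinj; apply/rowP => i.
rewrite !hcD mulrA; have := he i; move/eqP; rewrite -subr_eq0 -{2}(mul1r (n Y i)) -mulrBl mulf_eq0.
case/orP => [|/eqP/n_eq0 ->]; last by rewrite mulr0.
by rewrite subr_eq0 => /eqP ->; rewrite mul1r.
Qed.

End Coords3.
Section DotVec.
Variable R : realType.
Local Notation C := R[i].

Lemma dot_mxvec k (X Y : 'M[C]_k) : dot (mxvec Y) (mxvec X) = \tr (dag X *m Y).
Proof.
rewrite dotE (reindex (uncurry (@mxvec_index k k))) /=; last first.
  exact: curry_mxvec_bij.
transitivity (\sum_(p : 'I_k * 'I_k) Y p.1 p.2 * (X p.1 p.2)^*).
  by apply: eq_bigr => [[i j]] _ /=; rewrite !mxvecE.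
rewrite -(pair_bigA _ (fun i j => Y i j * (X i j)^*)) /=.
rewrite /mxtrace exchange_big; apply: eq_bigr => i _; rewrite mxE; apply: eq_bigr => j _.
by rewrite !mxE mulrC.
Qed.
End DotVec.
Section Rho.
Variable R : realType.
Local Notation C := R[i].

Lemma delta_diag m (e : 'rV[C]_m) i : (delta_mx 0 i : 'rV[C]_m) *m diag_mx e = e 0 i *: delta_mx 0 i.
Proof.
apply/rowP => j; rewrite mul_mx_diag !mxE.
by rewrite eqxx /=; case: (eqVneq j i) => [->|_]; rewrite ?mulr1 ?mul1r ?mulr0 ?mul0r.
Qed.

Lemma gt0_complex (z : C) : 0 < z -> z = ((complex.Re z)%:C)%C /\ 0 < complex.Re z.
Proof. case: z => a b; rewrite ltcE /= => /andP[/eqP -> ha]; by split. Qed.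

Lemma realC_real (x : R) : (x%:C)%C \is @Num.real C.
Proof. by apply/complex_realP; exists x. Qed.

Variables (k : nat) (rho : 'M[C]_k) (s : R).
Hypothesis rho_herm : rho \is hermsymmx.
Hypothesis rho_pd : forall v : 'rV[C]_k, v != 0 -> 0 < (v *m rho *m dag v) 0 0.

Local Notation V := (spectralmx rho).
Local Notation d := (spectral_diag rho).

Lemma VVd : V *m dag V = 1%:M.
Proof. by have /unitarymxP := spectral_unitarymx rho; rewrite dag_trC. Qed.
Lemma VdV : dag V *m V = 1%:M.
Proof. exact: mulmx1C VVd. Qed.
Lemma invV : invmx V = dag V.
Proof. by rewrite invmx_unitary ?spectral_unitarymx // dag_trC. Qed.

Lemma rhoE : rho = dag V *m diag_mx d *m V.
Proof. by have /orthomx_spectralP := hermitian_normalmx rho_herm; rewrite invV. Qed.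

Lemma d_gt0 i : 0 < d 0 i.
Proof.
have h1 : ((delta_mx 0 i : 'rV[C]_k) *m V) *m dag V = delta_mx 0 i by rewrite -mulmxA VVd mulmx1.
have nz : (delta_mx 0 i : 'rV[C]_k) *m V != 0.
  apply/eqP => h0; move: h1; rewrite h0 mul0mx => /rowP /(_ i).
  by rewrite !mxE !eqxx /= => /eqP; rewrite eq_sym oner_eq0.
have := rho_pd nz; move: rhoE VVd; set W := spectralmx rho; set D := spectral_diag rho.
move=> -> hW; rewrite dagM !mulmxA -!(mulmxA _ W (dag W)) hW !mulmx1 delta_diag -scalemxAl mxE -/(dot _ _).
by rewrite dot_delta_r mxE !eqxx mulr1.
Qed.

Definition rr i := complex.Re (d 0 i).
Lemma rr_gt0 i : 0 < rr i.
Proof. by have [_ ->] := gt0_complex (d_gt0 i). Qed.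
Lemma d_rr i : d 0 i = ((rr i)%:C)%C.
Proof. by have [-> _] := gt0_complex (d_gt0 i). Qed.

Definition dg (t : R) : 'M[C]_k := diag_mx (\row_i ((rr i `^ t)%:C)%C).

Lemma dgD a b : dg a *m dg b = dg (a + b).
Proof.
rewrite /dg mulmx_diag; congr diag_mx; apply/rowP => i; rewrite !mxE.
rewrite powRD; first by rewrite rmorphM.
by apply/implyP => _; rewrite gt_eqF ?rr_gt0.
Qed.

Lemma dg0 : dg 0 = 1%:M.
Proof.
rewrite /dg -diag_const_mx; congr diag_mx; apply/rowP => i; rewrite !mxE.
by rewrite powRr0.
Qed.

Lemma dg1 : dg 1 = diag_mx d.
Proof.
rewrite /dg; congr diag_mx; apply/rowP => i; rewrite !mxE.
by rewrite powRr1 ?d_rr // ltW ?rr_gt0.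
Qed.

Lemma dag_dg t : dag (dg t) = dg t.
Proof.
rewrite /dag /dg (map_diag_mx (@Num.conj_op C)) tr_diag_mx; congr diag_mx.
by apply/rowP => i; rewrite !mxE; apply: conj_Creal; apply: realC_real.
Qed.

Definition Pw t := locked (dag V *m dg t *m V).
Lemma PwE t : Pw t = dag V *m dg t *m V.
Proof. by rewrite /Pw -lock. Qed.

Lemma mxpowrE t : mxpowr rho t = Pw t.
Proof. by rewrite PwE /mxpowr /hermfun invV. Qed.

Lemma PwD a b : Pw a *m Pw b = Pw (a + b).
Proof.
by rewrite !PwE !mulmxA -(mulmxA _ V (dag V)) VVd mulmx1 -(mulmxA _ (dg a)) dgD.
Qed.

Lemma Pw0 : Pw 0 = 1%:M.
Proof. by rewrite PwE dg0 mulmx1 VdV. Qed.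

Lemma Pw1 : Pw 1 = rho.
Proof. by rewrite PwE dg1 -rhoE. Qed.

Lemma dag_Pw t : dag (Pw t) = Pw t.
Proof. by rewrite !PwE !dagM dagK dag_dg mulmxA. Qed.

Definition Gam Y := Pw (1 - s) *m Y *m Pw s.
Definition Gami X := Pw (s - 1) *m X *m Pw (- s).

Lemma GamK : cancel Gam Gami.
Proof.
move=> Y; rewrite /Gam /Gami !mulmxA PwD -(mulmxA _ (Pw s)) PwD.
have -> : s - 1 + (1 - s) = 0 by lra.
by rewrite subrr Pw0 mul1mx mulmx1.
Qed.

Lemma GamiK : cancel Gami Gam.
Proof.
move=> Y; rewrite /Gam /Gami !mulmxA PwD -(mulmxA _ (Pw (- s))) PwD.
have -> : 1 - s + (s - 1) = 0 by lra.
by rewrite addNr Pw0 mul1mx mulmx1.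
Qed.

Lemma Gam_lin a X Y : Gam (a *: X + Y) = a *: Gam X + Gam Y.
Proof. by rewrite /Gam mulmxDr mulmxDl -scalemxAr -scalemxAl. Qed.

Lemma Gam1 : Gam 1%:M = rho.
Proof. by rewrite /Gam mulmx1 PwD (_ : 1 - s + s = 1) ?Pw1 //; lra. Qed.

Lemma sinnerE A B : sinner s rho A B = \tr (dag A *m Gam B).
Proof. by rewrite /sinner !mxpowrE /Gam !mulmxA. Qed.

Definition Phi0 A := dg ((1 - s) / 2) *m (V *m A *m dag V) *m dg (s / 2).
Definition Phi A : 'rV[C]_(k * k) := mxvec (Phi0 A).
Definition Psi (v : 'rV[C]_(k * k)) : 'M[C]_k :=
  dag V *m (dg (- ((1 - s) / 2)) *m vec_mx v *m dg (- (s / 2))) *m V.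

Lemma PhiK : cancel Phi Psi.
Proof.
move=> A; rewrite /Psi /Phi mxvecK /Phi0 !mulmxA.
rewrite -(mulmxA (dag V) (dg _)) dgD addNr dg0 mulmx1 VdV mul1mx.
rewrite -(mulmxA _ (dg (s / 2))) dgD addrN dg0 mulmx1.
by rewrite -mulmxA VdV mulmx1.
Qed.

Lemma PsiK : cancel Psi Phi.
Proof.
move=> v; rewrite /Psi /Phi /Phi0 -[RHS]vec_mxK; congr mxvec.
rewrite !mulmxA -!(mulmxA _ V (dag V)) VVd !mulmx1 dgD addrN dg0 mul1mx.
by rewrite -mulmxA dgD addNr dg0 mulmx1.
Qed.

Lemma Phi_lin a X Y : Phi (a *: X + Y) = a *: Phi X + Phi Y.
Proof.
rewrite /Phi; have -> : Phi0 (a *: X + Y) = a *: Phi0 X + Phi0 Y.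
  rewrite /Phi0 mulmxDr mulmxDl mulmxDr mulmxDl -!scalemxAr -!scalemxAl.
  by rewrite -scalemxAr -scalemxAl.
by rewrite linearP.
Qed.

Lemma ipE A B : sinner s rho A B = dot (Phi B) (Phi A).
Proof.
rewrite dot_mxvec sinnerE /Gam /Phi0 !dagM dagK !dag_dg.
have ea : dg (1 - s) = dg ((1 - s) / 2) *m dg ((1 - s) / 2).
  by rewrite dgD; congr dg; lra.
have eb : dg s = dg (s / 2) *m dg (s / 2) by rewrite dgD; congr dg; lra.
rewrite !PwE ea eb !mulmxA.
by rewrite [LHS]mxtrace_mulC !mulmxA [LHS]mxtrace_mulC !mulmxA.
Qed.

Definition quad (A : 'M[C]_k) (v : 'rV[C]_k) := (v *m A *m dag v) 0 0.

Lemma tr_quad (A W : 'M[C]_k) : \tr (W *m A *m dag W) = \sum_i quad A (row i W).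
Proof.
rewrite /mxtrace; apply: eq_bigr => i _; rewrite /quad.
transitivity ((row i W *m A *m dag W) 0 i); first by rewrite -!row_mul !mxE.
by rewrite !mxE; apply: eq_bigr => j _; rewrite !mxE.
Qed.

Lemma quad_ge0 v : 0 <= quad rho v.
Proof.
case: (eqVneq v 0) => [->|nz]; first by rewrite /quad !mul0mx mxE.
exact: ltW (rho_pd nz).
Qed.

Lemma tr_quad_ge0 (W : 'M[C]_k) : 0 <= \tr (W *m rho *m dag W).
Proof. by rewrite tr_quad; apply: sumr_ge0 => i _; apply: quad_ge0. Qed.

Lemma tr_quad_gt0 (W : 'M[C]_k) : W != 0 -> 0 < \tr (W *m rho *m dag W).
Proof.
move=> nz; have [i ri] : exists i, row i W != 0.
  apply/existsP; apply: contraR nz => /existsPn h; apply/eqP/row_matrixP => i.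
  by rewrite row0; apply/eqP; have := h i; rewrite negbK.
rewrite tr_quad (bigD1 i) //=; apply: ltr_wpDr; last exact: rho_pd.
by apply: sumr_ge0 => j _; apply: quad_ge0.
Qed.

Lemma KS (Ks : seq 'M[C]_k) (hK : \sum_(K <- Ks) dag K *m K = 1%:M)
  (hfix : kraus_map Ks rho = rho) W :
  \tr (kraus_dual Ks W *m rho *m dag (kraus_dual Ks W)) <= \tr (W *m rho *m dag W).
Proof.
set Z := kraus_dual Ks W.
have e : \sum_(K <- Ks) dag (W *m K - K *m Z) *m (W *m K - K *m Z) =
         kraus_dual Ks (dag W *m W) - dag Z *m Z.
  have eK : forall K, dag (W *m K - K *m Z) *m (W *m K - K *m Z) =
     (dag K *m (dag W *m W) *m K - dag K *m dag W *m K *m Z) -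
     (dag Z *m (dag K *m W *m K) - dag Z *m (dag K *m K) *m Z).
    move=> K; rewrite dagD dagN !dagM mulmxBl !mulmxBr !mulmxA.
    done.
  rewrite (eq_bigr _ (fun K _ => eK K)) !sumrB.
  have s2 : \sum_(K <- Ks) dag K *m dag W *m K *m Z = dag Z *m Z.
    by rewrite -mulmx_suml /Z kraus_dual_dag.
  have s3 : \sum_(K <- Ks) dag Z *m (dag K *m W *m K) = dag Z *m Z.
    by rewrite -mulmx_sumr.
  have s4 : \sum_(K <- Ks) dag Z *m (dag K *m K) *m Z = dag Z *m Z.
    by rewrite -mulmx_suml -mulmx_sumr hK mulmx1.
  by rewrite s2 s3 s4 subrr subr0.
rewrite -subr_ge0.
have e2 : \tr (W *m rho *m dag W) - \tr (Z *m rho *m dag Z) =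
          \tr ((kraus_dual Ks (dag W *m W) - dag Z *m Z) *m rho).
  rewrite mulmxBl raddfB /= tr_dual hfix.
  by rewrite [\tr (W *m rho *m dag W)]mxtrace_mulC [\tr (Z *m rho *m dag Z)]mxtrace_mulC !mulmxA.
rewrite e2 -e mulmx_suml tr_sum; apply: sumr_ge0 => K _.
by rewrite -mulmxA mxtrace_mulC; apply: tr_quad_ge0.
Qed.

Lemma KS_eig (Ks : seq 'M[C]_k) (hK : \sum_(K <- Ks) dag K *m K = 1%:M)
  (hfix : kraus_map Ks rho = rho) W lam :
  W != 0 -> kraus_dual Ks W = lam *: W -> lam * lam^* <= 1.
Proof.
move=> nz h; have := KS hK hfix W; rewrite h.
have -> : (lam *: W) *m rho *m dag (lam *: W) = (lam * lam^*) *: (W *m rho *m dag W).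
  by rewrite dagZ -scalemxAl -scalemxAl -scalemxAr scalerA.
by rewrite mxtraceZ ger_pMl //; apply: tr_quad_gt0.
Qed.

End Rho.
Section FP.
Variable R : realType.
Local Notation C := R[i].

Lemma hermE k (A : 'M[C]_k) : (A \is hermsymmx) = (A == dag A).
Proof. by rewrite is_hermitianmxE expr0 scale1r dag_trC. Qed.

Lemma quad_udiag k (U : 'M[C]_k) (e : 'rV[C]_k) (v : 'rV[C]_k) :
  U *m dag U = 1%:M ->
  quad (dag U *m diag_mx e *m U) v =
    \sum_i e 0 i * ((v *m dag U) 0 i * ((v *m dag U) 0 i)^*) /\
  dot v v = \sum_i (v *m dag U) 0 i * ((v *m dag U) 0 i)^*.
Proof.
move=> hU; have hU' : dag U *m U = 1%:M := mulmx1C hU.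
set w := v *m dag U.
split.
  have -> : quad (dag U *m diag_mx e *m U) v = dot (w *m diag_mx e) w.
    by rewrite /quad /dot /w dagM dagK !mulmxA.
  by rewrite dotE; apply: eq_bigr => i _; rewrite mul_mx_diag mxE mulrA [e 0 i * _]mulrC.
have -> : dot v v = dot w w.
  by rewrite /dot /w dagM dagK mulmxA -(mulmxA v) hU' mulmx1.
by rewrite dotE.
Qed.

Lemma quad_lb k (U : 'M[C]_k) (e : 'rV[C]_k) (a : C) :
  U *m dag U = 1%:M -> (forall i, a <= e 0 i) ->
  forall v, a * dot v v <= quad (dag U *m diag_mx e *m U) v.
Proof.
move=> hU ha v; have [-> ->] := quad_udiag e v hU.
rewrite mulr_sumr; apply: ler_sum => i _; apply: ler_wpM2r => //.
exact: mul_conjC_ge0.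
Qed.

Lemma quadD k (A B : 'M[C]_k) v : quad (A + B) v = quad A v + quad B v.
Proof. by rewrite /quad mulmxDr mulmxDl mxE. Qed.

Lemma quadZ k (A : 'M[C]_k) a v : quad (a *: A) v = a * quad A v.
Proof. by rewrite /quad -scalemxAr -scalemxAl mxE. Qed.

Lemma quad_delta k (A : 'M[C]_k) i : quad A (delta_mx 0 i) = A i i.
Proof.
have -> : quad A (delta_mx 0 i) = dot (delta_mx 0 i *m A) (delta_mx 0 i) by [].
by rewrite dot_delta_r -rowE mxE.
Qed.

End FP.
Section FP2.
Variable R : realType.
Local Notation C := R[i].

Lemma herm_lb k (W : 'M[C]_k) : W \is hermsymmx ->
  exists L : C, 0 <= L /\ forall v, - L * dot v v <= quad W v.
Proof.
move=> Wh; have /orthomx_spectralP We := hermitian_normalmx Wh.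
have hP := spectral_unitarymx W; have Wr := hermitian_spectral_diag_real Wh.
move: We hP Wr; set Q := spectralmx W; set h := spectral_diag W => We hP Wr.
have QQd : Q *m dag Q = 1%:M by have /unitarymxP := hP; rewrite dag_trC.
have iQ : invmx Q = dag Q by rewrite invmx_unitary // dag_trC.
exists (\sum_i `|h 0 i|); split; first by apply: sumr_ge0 => i _.
move=> v; rewrite We iQ; apply: quad_lb => // i.
apply: (real_lerNnormlW (mxOverP Wr 0 i)).
by rewrite (bigD1 i) //= lerDl; apply: sumr_ge0 => j _.
Qed.

Variables (k : nat) (rho : 'M[C]_k) (N : 'M[C]_k -> 'M[C]_k) (m : C).
Hypotheses (kpos : (0 < k)%N) (m0 : 0 < m) (lb : forall v, m * dot v v <= quad rho v)
  (rho_herm : rho \is hermsymmx)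
  (Nlin : forall a X Y, N (a *: X + Y) = a *: N X + N Y) (Nrho : N rho = rho)
  (Nuniq : forall tau, is_state tau -> N tau = tau -> tau = rho).

Let N0 : N 0 = 0.
Proof.
have := Nlin 1 0 0; rewrite !scale1r addr0 => h.
by apply: (addrI (N 0)); rewrite addr0 -h.
Qed.
Let NZ a X : N (a *: X) = a *: N X.
Proof. by rewrite -[a *: X]addr0 Nlin N0 addr0. Qed.
Let ND X Y : N (X + Y) = N X + N Y.
Proof. by rewrite -[X in N (X + _)]scale1r Nlin scale1r. Qed.

Lemma fixed_herm W : W \is hermsymmx -> N W = W -> exists a, W = a *: rho.
Proof.
move=> Wh fW; have [L [L0 hL]] := herm_lb Wh.
pose t := L / m + 1.
have t0 : 0 < t by rewrite /t ltr_wpDl // divr_ge0 // ltW.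
pose S := W + t *: rho.
have hS : forall v, m * dot v v <= quad S v.
  move=> v; rewrite /S quadD quadZ.
  have e : m * dot v v = - L * dot v v + t * (m * dot v v).
    rewrite /t mulrA mulrDl mulfVK ?gt_eqF // mul1r mulrDl mulNr addKr.
    done.
  rewrite e; apply: lerD => //; apply: ler_wpM2l => //; exact: ltW.
have Sii : forall i, m <= S i i.
  by move=> i; rewrite -quad_delta; apply: le_trans (hS _); rewrite dot_delta_r mxE !eqxx mulr1.
have trS : 0 < \tr S.
  rewrite /mxtrace; have i0 : 'I_k := Ordinal kpos.
  rewrite (bigD1 i0) //=; apply: ltr_wpDr; last exact: lt_le_trans (Sii i0).
  by apply: sumr_ge0 => j _; apply: le_trans (Sii j); apply: ltW.
have trSr : (\tr S)^* = \tr S by apply: conj_Creal; apply: gtr0_real.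
have tr_ : (t)^* = t by apply: conj_Creal; apply: gtr0_real.
pose sig := (\tr S)^-1 *: S.
have Sh : S \is hermsymmx.
  move: Wh rho_herm; rewrite !hermE /S => /eqP hW /eqP hr.
  by rewrite dagD dagZ tr_ -hW -hr.
have sig_state : is_state sig.
  split; [split|].
  - move: Sh; rewrite !hermE /sig => /eqP hS'.
    by rewrite dagZ fmorphV /= trSr -hS'.
  - move=> v; rewrite -/(quad sig v) quadZ; apply: mulr_ge0.
      by rewrite invr_ge0 ltW.
    by apply: le_trans (hS v); apply: mulr_ge0; [apply: ltW|apply: dot_ge0].
  - by rewrite /sig mxtraceZ mulVf // gt_eqF.
have Nsig : N sig = sig by rewrite /sig NZ /S ND NZ fW Nrho.
have := Nuniq sig_state Nsig; rewrite /sig => /(congr1 (fun X => \tr S *: X)).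
rewrite scalerA mulfV ?gt_eqF // scale1r /S => hW.
by exists (\tr S - t); rewrite scalerBl -hW addrK.
Qed.

Hypothesis Ndag : forall X, N (dag X) = dag (N X).

Lemma fixed_all W : N W = W -> exists a, W = a *: rho.
Proof.
move=> fW.
pose c1 : C := 2^-1. pose c2 : C := (2 * 'i)^-1.
pose W1 := c1 *: (W + dag W). pose W2 := c2 *: (W - dag W).
have fWd : N (dag W) = dag W by rewrite Ndag fW.
have NN : forall X, N (- X) = - N X by move=> X; rewrite -scaleN1r NZ scaleN1r.
have c1r : c1^* = c1 by apply: conj_Creal; apply: gtr0_real; rewrite /c1 invr_gt0 ltr0Sn.
have c2c : c2^* = - c2.
  by rewrite /c2 fmorphV /= rmorphM /= rmorph_nat conjCi mulrN invrN.
have W1h : W1 \is hermsymmx.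
  by rewrite hermE; apply/eqP; rewrite /W1 dagZ c1r dagD dagK addrC.
have W2h : W2 \is hermsymmx.
  by rewrite hermE; apply/eqP; rewrite /W2 dagZ c2c dagD dagN dagK scaleNr -scalerN opprB.
have fW1 : N W1 = W1 by rewrite /W1 NZ ND fW fWd.
have fW2 : N W2 = W2 by rewrite /W2 NZ ND NN fW fWd.
have [a1 e1] := fixed_herm W1h fW1.
have [a2 e2] := fixed_herm W2h fW2.
exists (a1 + 'i * a2).
have -> : W = W1 + 'i *: W2.
  apply/matrixP => i j; rewrite /W1 /W2 !mxE /c1 /c2.
  have iN : ('i : C) != 0 by rewrite neq0Ci.
  by field.
by rewrite e1 e2 scalerA -scalerDl.
Qed.

End FP2.
Section Gibbs.
Variable R : realType.
Local Notation C := R[i].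

Lemma ltr0c (x : R) : (0 < ((x%:C)%C : C)) = (0 < x).
Proof. by rewrite ltcE /= eqxx. Qed.

Lemma pos_lb k (x : 'I_k -> R) : (forall i, 0 < x i) ->
  exists a, 0 < a /\ forall i, a <= x i.
Proof.
move=> hx; pose S := \sum_i (x i)^-1 + 1.
have S0 : 0 < S by rewrite /S ltr_wpDl // sumr_ge0 // => i _; rewrite invr_ge0 ltW.
exists S^-1; split; first by rewrite invr_gt0.
move=> i; rewrite -[x i]invrK lef_pV2 ?posrE ?invr_gt0 //.
rewrite /S (bigD1 i) //= -addrA lerDl addr_ge0 //.
by apply: sumr_ge0 => j _; rewrite invr_ge0 ltW.
Qed.

Lemma hermfun_lb k (A : 'M[C]_k) (f : R -> R) (hf : forall x, 0 < f x) : (0 < k)%N ->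
  exists m : C, 0 < m /\
    forall v, m * dot v v <= quad ((\tr (hermfun f A))^-1 *: hermfun f A) v.
Proof.
move=> kpos.
have hP := spectral_unitarymx A.
set U := spectralmx A in hP *.
have UUd : U *m dag U = 1%:M by have /unitarymxP := hP; rewrite dag_trC.
have UdU : dag U *m U = 1%:M := mulmx1C UUd.
have iU : invmx U = dag U by rewrite invmx_unitary // dag_trC.
pose x i := f (complex.Re (spectral_diag A 0 i)).
pose e := \row_i ((x i)%:C)%C.
have hE : hermfun f A = dag U *m diag_mx e *m U by rewrite /hermfun iU.
have [a [a0 ha]] := pos_lb (fun i => hf (complex.Re (spectral_diag A 0 i))).
have trE : \tr (hermfun f A) = \sum_i e 0 i.
  by rewrite hE mxtrace_mulC mulmxA UUd mul1mx mxtrace_diag.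
have tr0 : 0 < \tr (hermfun f A).
  rewrite trE (bigD1 (Ordinal kpos)) //=; apply: ltr_wpDr.
    by apply: sumr_ge0 => j _; rewrite mxE ler0c; apply: ltW; apply: hf.
  by rewrite mxE ltr0c; apply: hf.
exists ((\tr (hermfun f A))^-1 * (a%:C)%C); split.
  by rewrite mulr_gt0 // ?invr_gt0 // ltr0c.
move=> v; rewrite quadZ -mulrA; apply: ler_wpM2l; first by rewrite invr_ge0 ltW.
rewrite hE; apply: quad_lb => // i.
by rewrite mxE lecR ha.
Qed.

Lemma gibbs_lb n (beta : R) (H : 'M[C]_(2 ^ n)) :
  exists m : C, 0 < m /\ forall v, m * dot v v <= quad (gibbs beta H) v.
Proof.
by apply: hermfun_lb; [apply: expR_gt0 | rewrite expn_gt0].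
Qed.

End Gibbs.
Section Helpers.
Variable R : realType.
Local Notation C := R[i].

Lemma intertwine k (rho : 'M[C]_k) (s : R) (Ks : seq 'M[C]_k)
  (hsa : forall A B, sinner s rho A (kraus_dual Ks B) = sinner s rho (kraus_dual Ks A) B) B :
  Gam rho s (kraus_dual Ks B) = kraus_map Ks (Gam rho s B).
Proof.
apply: tr_mul_inj => X.
have := hsa (dag X) B; rewrite !sinnerE dagK kraus_dual_dag dagK => ->.
exact: tr_dual.
Qed.

Lemma lin0 (U V : lmodType C) (f : U -> V) :
  (forall a x y, f (a *: x + y) = a *: f x + f y) -> f 0 = 0.
Proof.
move=> hf; have := hf 1 0 0; rewrite !scale1r addr0 => h.
by apply: (addrI (f 0)); rewrite addr0 -h.
Qed.

Lemma linZ (U V : lmodType C) (f : U -> V) :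
  (forall a x y, f (a *: x + y) = a *: f x + f y) -> forall a x, f (a *: x) = a *: f x.
Proof. by move=> hf a x; rewrite -[a *: x]addr0 hf (lin0 hf) addr0. Qed.

Lemma dotZl m a (u w : 'rV[C]_m) : dot (a *: u) w = a * dot u w.
Proof. by rewrite /dot -scalemxAl mxE. Qed.

End Helpers.
Theorem lemma4p1 (R : realType) (n : nat) (H : 'M[R[i]]_(2 ^ n)) (beta s : R)
  (M N : 'M[R[i]]_(2 ^ n) -> 'M[R[i]]_(2 ^ n)) :
  H \is hermsymmx -> 0 < beta -> 0 <= s <= 1 ->
  is_channel M -> is_channel N ->
  detailed_balance s (gibbs beta H) M ->
  detailed_balance s (gibbs beta H) N ->
  detailed_balance s (gibbs beta H) (fun X => M (N (M X))) /\
  (unique_fixed_point N (gibbs beta H) -> spectrum_in01 N ->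
   unique_fixed_point (fun X => M (N (M X))) (gibbs beta H) /\
   spectrum_in01 (fun X => M (N (M X)))).
Proof.
move=> Hh beta0 s01 chM chN dbM dbN.
split; first exact: (db_comp dbM dbN).
move=> [rho_state [Nrho Nuniq]] specN.
have [m0 [m0pos lb]] := gibbs_lb beta H.
move: rho_state Nrho Nuniq specN lb dbM dbN.
set rho := gibbs beta H => rho_state Nrho Nuniq specN lb dbM dbN.
have [[rho_herm _] tr_rho] := rho_state.
have rho_pd : forall v : 'rV[R[i]]_(2 ^ n), v != 0 -> 0 < (v *m rho *m dag v) 0 0.
  move=> v nz; have := lb v; rewrite /quad => h; apply: lt_le_trans h.
  by apply: mulr_gt0 => //; apply: dot_gt0.
have kpos : (0 < 2 ^ n)%N by rewrite expn_gt0.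
move: chM chN dbM dbN => [KcM [hKM eM]] [KcN [hKN eN]] [KdM [eM' sM]] [KdN [eN' sN]].
pose DM := kraus_dual KcM; pose DN := kraus_dual KcN.
have DMe : forall Y, kraus_dual KdM Y = DM Y.
  by apply: dual_unique => X; rewrite -eM -eM'.
have DNe : forall Y, kraus_dual KdN Y = DN Y.
  by apply: dual_unique => X; rewrite -eN -eN'.
have saM : forall A B, sinner s rho A (DM B) = sinner s rho (DM A) B.
  by move=> A B; rewrite -!DMe sM.
have saN : forall A B, sinner s rho A (DN B) = sinner s rho (DN A) B.
  by move=> A B; rewrite -!DNe sN.
have DMlin : forall a X Y, DM (a *: X + Y) = a *: DM X + DM Y by move=> *; apply: kraus_dual_lin.
have DNlin : forall a X Y, DN (a *: X + Y) = a *: DN X + DN Y by move=> *; apply: kraus_dual_lin.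
have DM1 : DM 1%:M = 1%:M.
  by rewrite /DM /kraus_dual -[RHS]hKM; apply: eq_bigr => K _; rewrite mulmx1.
pose G := Gam rho s; pose Gi := Gami rho s.
have GK : cancel G Gi := GamK s rho_herm rho_pd.
have GiK : cancel Gi G := GamiK s rho_herm rho_pd.
have Glin : forall a X Y, G (a *: X + Y) = a *: G X + G Y := Gam_lin rho s.
have GZ := linZ Glin.
have G1 : G 1%:M = rho := Gam1 s rho_herm rho_pd.
have IM : forall B, G (DM B) = M (G B).
  by move=> B; rewrite eM; apply: intertwine.
have IN : forall B, G (DN B) = N (G B).
  by move=> B; rewrite eN; apply: intertwine.
have Mrho : M rho = rho by rewrite -G1 -IM DM1.
have Nlin : forall a X Y, N (a *: X + Y) = a *: N X + N Y by move=> *; rewrite !eN kraus_map_lin.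
have Ndag : forall X, N (dag X) = dag (N X) by move=> X; rewrite !eN kraus_map_dag.
have PK := PhiK s rho_herm rho_pd; have QK := PsiK s rho_herm rho_pd.
have PL := Phi_lin rho s; have PE := ipE s rho_herm rho_pd.
have [cM [lamM [realM eigM ipM cDM injM]]] := coords PK QK PL PE DMlin saM.
have [cN [lamN [realN eigN ipN cDN injN]]] := coords PK QK PL PE DNlin saN.
have lamN01 : forall i, 0 <= lamN i <= 1.
  move=> i; have [X [nz hX]] := eigN i; apply: (specN _ (G X)).
    by apply: contra nz => /eqP h; apply/eqP; rewrite -(GK X) h /Gi /Gami mulmx0 mul0mx.
  by rewrite -IN hX GZ.
have lamM1 : forall i, lamM i * lamM i <= 1.
  move=> i; have [X [nz hX]] := eigM i.
  have := KS_eig rho_pd hKM (etrans (esym (eM rho)) Mrho) nz hX.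
  by rewrite (conj_Creal (realM i)).
have C1 := coords_C1 ipN cDN injN lamN01.
have C2 := coords_C2 ipM cDM injM realM lamM1.
have ippos : forall Y, Y != 0 -> 0 < sinner s rho Y Y.
  move=> Y nz; rewrite PE; apply: dot_gt0.
  apply: contra nz => /eqP h; apply/eqP; rewrite -(PK Y) h.
  by rewrite /Psi raddf0 ?mulmx0 ?mul0mx ?mulmx0 ?mul0mx.
have ipZ : forall Y a, sinner s rho Y (a *: Y) = a * sinner s rho Y Y.
  by move=> Y a; rewrite !PE (linZ PL) dotZl.
have IT : forall Y, G (DM (DN (DM Y))) = M (N (M (G Y))) by move=> Y; rewrite IM IN IM.
split; last first.
  move=> mu X nz hX.
  pose Y := Gi X.
  have YX : G Y = X by rewrite /Y GiK.
  have Ynz : Y != 0.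
    by apply: contra nz => /eqP h; apply/eqP; rewrite -YX h /G /Gam mulmx0 mul0mx.
  have hY : DM (DN (DM Y)) = mu *: Y.
    by apply: (can_inj GK); rewrite IT YX hX -YX GZ.
  have e1 : sinner s rho Y (DM (DN (DM Y))) = sinner s rho (DM Y) (DN (DM Y)) by rewrite saM.
  rewrite hY ipZ in e1.
  have [c1 c2 _] := C1 (DM Y); have [c3 _] := C2 Y.
  have p0 := ippos Y Ynz.
  apply/andP; split.
    by rewrite -(pmulr_lge0 _ p0) e1.
  by rewrite -(ger_pMl _ p0) e1 (le_trans c2 c3).
split; first by [].
split; first by rewrite Mrho Nrho Mrho.
move=> tau tau_state htau.
pose Y := Gi tau.
have YX : G Y = tau by rewrite /Y GiK.
have hY : DM (DN (DM Y)) = Y by apply: (can_inj GK); rewrite IT YX htau.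
have e1 : sinner s rho Y Y = sinner s rho (DM Y) (DN (DM Y)) by rewrite -saM hY.
have [c1 c2 c4] := C1 (DM Y); have [c3 c5] := C2 Y.
have eq1 : sinner s rho (DM Y) (DN (DM Y)) = sinner s rho (DM Y) (DM Y).
  by apply/eqP; rewrite eq_le c2 -e1 c3.
have eq2 : sinner s rho (DM Y) (DM Y) = sinner s rho Y Y.
  by apply/eqP; rewrite eq_le c3 e1 c2.
have fZ := c4 eq1; have fY := c5 eq2.
have NG : N (G (DM Y)) = G (DM Y) by rewrite -IN fZ.
have [a ha] := fixed_all kpos m0pos lb rho_herm Nlin Nrho Nuniq Ndag NG.
have hZ : DM Y = a *: 1%:M by apply: (can_inj GK); rewrite ha GZ G1.
have Ya : Y = a *: 1%:M by rewrite -fY hZ (linZ DMlin) DM1.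
have taua : tau = a *: rho by rewrite -YX Ya GZ G1.
have a1 : a = 1.
  by have := tau_state.2; rewrite taua mxtraceZ tr_rho mulr1.
by rewrite taua a1 scale1r.
Qed.
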